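(* Let $\nu\in(0,1]$, $\varrho>0$, $\delta>0$ and $x\in K_\nu^\varrho$. Let $g^\delta\in\mathbb Y$ satisfy $\|g^\delta-Ax\|_{\mathbb Y}\le\delta$, let $\alpha>0$ and $\hat x_\alpha\in R_\alpha(g^\delta)$. 1. (a priori rule) Let $c_r\ge c_l>0$. If $c_l\varrho^{-1/\nu}\delta^{1/\nu}\le\alpha\le c_r\varrho^{-1/\nu}\delta^{1/\nu}$, then $L(x,\hat x_\alpha)\le\Omega(c_1\delta,K_\nu^{c_2\varrho})$ with $c_1:=1+c_r^\nu$ and $c_2:=2+c_l^{-\nu}$. 2. (discrepancy principle) Let $C_D>c_D>1$. If $c_D\delta\le\|g^\delta-A\hat x_\alpha\|_{\mathbb Y}\le C_D\delta$, then $L(x,\hat x_\alpha)\le\Omega(d_1\delta,K_\nu^{d_2\varrho})$ with $d_1:=1+C_D$ and $d_2:=2+(c_D-1)^{-1}$.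
   Context: Standing setting: $\mathbb X$ is a real Banach space and $\tau$ is a topology on $\mathbb X$ such that $(\mathbb X,\tau)$ is a locally convex Hausdorff space. $\mathcal R:\mathbb X\to(-\infty,\infty]$ is proper and convex, and for every $\lambda\in\mathbb R$ the sublevel set $\{x\in\mathbb X:\mathcal R(x)\le\lambda\}$ is $\tau$-compact. $\mathbb Y$ is a real Hilbert space and $A:\mathbb X\to\mathbb Y$ is linear and continuous from $(\mathbb X,\tau)$ to $\mathbb Y$ equipped with its weak topology. For $\alpha>0$, $g\in\mathbb Y$ and $x\in\mathrm{dom}(\mathcal R)$ let $T_\alpha(x,g):=\frac1{2\alpha}\|g-Ax\|_{\mathbb Y}^2+\mathcal R(x)$ and $R_\alpha(g):=\operatorname{argmin}_{x\in\mathrm{dom}(\mathcal R)}T_\alpha(x,g)$ (a nonempty set). For $\nu\ge0$ define $\varrho_\nu:\mathbb X\to[0,\infty]$ by $\varrho_\nu(x):=\sup\{\alpha^{-\nu}\|Ax-Ax_\alpha\|_{\mathbb Y}:\alpha>0,\ x_\alpha\in R_\alpha(Ax)\}$, and for $\varrho>0$ set $K_\nu^\varrho:=\{x\in\mathbb X:\varrho_\nu(x)\le\varrho\}$ and $K_\nu:=\{x\in\mathbb X:\varrho_\nu(x)<\infty\}$. Let $L:\mathbb X\times\mathbb X\to[0,\infty]$ satisfy the triangle inequality $L(x,z)\le L(x,y)+L(y,z)$. For $K\subset\mathbb X$ and $\delta>0$ the modulus of continuity is $\Omega(\delta,K):=\sup\{L(x_1,x_2):x_1,x_2\in K,\ \|Ax_1-Ax_2\|_{\mathbb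 Y}\le\delta\}$. *)

(* Defs.v *)
From HB Require Import structures.
From mathcomp Require Import all_boot all_order all_algebra.
From mathcomp Require Import all_classical all_reals all_analysis.
Set Implicit Arguments. Unset Strict Implicit. Unset Printing Implicit Defensive.
Import Order.TTheory GRing.Theory Num.Theory.
Import numFieldNormedType.Exports.
Local Open Scope classical_set_scope.
Local Open Scope ring_scope.
Local Open Scope ereal_scope.

(* ip is an inner product on the normed space Y inducing its norm;
   a Hilbert space is a complete normed space with such an inner product. *)
Definition is_inner_product (R : realType) (Y : normedModType R)
    (ip : Y -> Y -> R) : Prop :=
  [/\ (forall y z : Y, ip y z = ip z y),
      (forall (a : R) (y z w : Y), ip (a *: y + z)%R w = (a * ip y w + ip z w)%R)
    & (forall y : Y, ip y y = (`|y| ^+ 2)%R)].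

Definition proper_fun (R : realType) (X : Type) (F : X -> \bar R) : Prop :=
  (forall x, F x != -oo) /\ (exists x, F x < +oo).

Definition convex_efun (R : realType) (X : lmodType R) (F : X -> \bar R) : Prop :=
  forall (x y : X) (t : R), (0 < t < 1)%R ->
    F (t *: x + (1 - t) *: y)%R <= t%:E * F x + (1 - t)%:E * F y.

Definition domR (R : realType) (X : Type) (F : X -> \bar R) : set X :=
  [set x | F x < +oo].

Definition Talpha (R : realType) (X : Type) (Y : normedModType R)
    (A : X -> Y) (F : X -> \bar R) (alpha : R) (x : X) (g : Y) : \bar R :=
  ((2 * alpha)^-1 * `|g - A x| ^+ 2)%:E + F x.

Definition Ralpha (R : realType) (X : Type) (Y : normedModType R)
    (A : X -> Y) (F : X -> \bar R) (alpha : R) (g : Y) : set X :=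
  [set x | domR F x /\
     forall z, domR F z -> Talpha A F alpha x g <= Talpha A F alpha z g].

Definition varrho_nu (R : realType) (X : Type) (Y : normedModType R)
    (A : X -> Y) (F : X -> \bar R) (nu : R) (x : X) : \bar R :=
  ereal_sup [set r | exists alpha xa, (0 < alpha)%R /\ Ralpha A F alpha (A x) xa
                       /\ r = (alpha `^ (- nu) * `|A x - A xa|)%:E].

Definition Knu (R : realType) (X : Type) (Y : normedModType R)
    (A : X -> Y) (F : X -> \bar R) (nu rho : R) : set X :=
  [set x | varrho_nu A F nu x <= rho%:E].

Definition Knu_inf (R : realType) (X : Type) (Y : normedModType R)
    (A : X -> Y) (F : X -> \bar R) (nu : R) : set X :=
  [set x | varrho_nu A F nu x < +oo].

Definition Omega (R : realType) (X : Type) (Y : normedModType R)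
    (A : X -> Y) (L : X -> X -> \bar R) (delta : R) (K : set X) : \bar R :=
  ereal_sup [set r | exists x1 x2, K x1 /\ K x2 /\ (`|A x1 - A x2| <= delta)%R
                       /\ r = L x1 x2].

(* Main.v *)
Require Import Defs.
From HB Require Import structures.
From mathcomp Require Import all_boot all_order all_algebra.
From mathcomp Require Import all_classical all_reals all_analysis.
From mathcomp Require Import ring lra.
Import Order.TTheory GRing.Theory Num.Theory.
Import numFieldNormedType.Exports.
Local Open Scope classical_set_scope.
Local Open Scope ring_scope.
Set Implicit Arguments. Unset Strict Implicit.

Lemma ip0l (R : realType) (Y : normedModType R) (ip : Y -> Y -> R) :
  is_inner_product ip -> forall w, ip 0 w = 0.
Proof.
case=> hs hl hn w; have := hl 1 0 0 w; rewrite scale1r addr0 mul1r; lra.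
Qed.

Section IPL.
Variables (R : realType) (Y : normedModType R) (ip : Y -> Y -> R).
Hypothesis hip : is_inner_product ip.

Lemma ipDl y z w : ip (y + z) w = ip y w + ip z w.
Proof. by case: hip => hs hl hn; rewrite -[y]scale1r hl mul1r scale1r. Qed.

Lemma ipZl a y w : ip (a *: y) w = a * ip y w.
Proof. by case: (hip) => hs hl hn; rewrite -[a *: y]addr0 hl ip0l // addr0. Qed.

Lemma ipNl y w : ip (- y) w = - ip y w.
Proof. by rewrite -scaleN1r ipZl mulN1r. Qed.

Lemma ipBl y z w : ip (y - z) w = ip y w - ip z w.
Proof. by rewrite ipDl ipNl. Qed.

Lemma ipC y z : ip y z = ip z y.
Proof. by case: hip. Qed.

Lemma ipBr y z w : ip w (y - z) = ip w y - ip w z.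
Proof. by rewrite ipC ipBl (ipC y) (ipC z). Qed.

Lemma ipDr y z w : ip w (y + z) = ip w y + ip w z.
Proof. by rewrite ipC ipDl (ipC y) (ipC z). Qed.

Lemma ipn y : ip y y = `|y| ^+ 2.
Proof. by case: hip. Qed.

Lemma normD2 y z : `|y + z| ^+ 2 = `|y| ^+ 2 + 2 * ip y z + `|z| ^+ 2.
Proof. by rewrite -!ipn ipDl !ipDr (ipC z y); ring. Qed.

Lemma normB2 y z : `|y - z| ^+ 2 = `|y| ^+ 2 - 2 * ip y z + `|z| ^+ 2.
Proof. by rewrite normD2 normrN ipC ipNl ipC; ring. Qed.

Lemma CS y z : ip y z <= `|y| * `|z|.
Proof.
have h1 := normD2 y z.
have h2 : `|y + z| <= `|y| + `|z| by exact: ler_normD.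
have h3 : 0 <= `|y + z| by [].
have h4 : `|y + z| ^+ 2 <= (`|y| + `|z|) ^+ 2.
  by rewrite ler_sqr ?nnegrE // addr_ge0.
nra.
Qed.

Lemma CSabs y z : `|ip y z| <= `|y| * `|z|.
Proof.
rewrite ler_norml CS andbT -[ip y z]opprK -ipNl lerN2.
by rewrite -[`|y|]normrN CS.
Qed.
End IPL.

Lemma small_t (R : realType) (a c : R) : 0 <= c ->
  (forall t : R, 0 < t < 1 -> a <= t * c) -> a <= 0.
Proof.
move=> hc h; rewrite leNgt; apply/negP => ha.
have hca : 0 < c + a by lra.
set t := a / (2 * (c + a)).
have Ht : t * (2 * (c + a)) = a by rewrite /t mulfVK // mulf_neq0 // gt_eqF.
have t0 : 0 < t by rewrite /t divr_gt0 // mulr_gt0.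
have t1 : t < 1 by nra.
have := h t; rewrite t0 t1 /= => /(_ isT); nra.
Qed.

Lemma aux_var (R : realType) (fu fv t p nr nd ai : R) : 0 < t -> 0 < ai ->
  2^-1 * ai * nr ^+ 2 + fu <= 2^-1 * ai * (nr ^+ 2 - 2 * (t * p) + (t * nd) ^+ 2)
     + (t * fv + (1 - t) * fu) ->
  fu - fv + p * ai <= t * (nd ^+ 2 * (2^-1 * ai)).
Proof.
move=> t0 ai0 h.
have e : 2^-1 * ai * (nr ^+ 2 - 2 * (t * p) + (t * nd) ^+ 2)
   = 2^-1 * ai * nr ^+ 2 - t * p * ai + t * (t * (nd ^+ 2 * (2^-1 * ai))).
  by rewrite !mulrDr; field.
rewrite e in h.
have h' : t * (fu - fv + p * ai) <= t * (t * (nd ^+ 2 * (2^-1 * ai))) by lra.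
by rewrite ler_pM2l in h'.
Qed.

Lemma var_ineq (R : realType) (X : lmodType R) (Y : normedModType R)
  (ip : Y -> Y -> R) (hip : is_inner_product ip) (A : {linear X -> Y})
  (F : X -> \bar R) (hFp : proper_fun F) (hFc : convex_efun F)
  (alpha : R) (g : Y) (u v : X) : 0 < alpha -> Ralpha A F alpha g u ->
  (F v < +oo)%E ->
  fine (F u) - fine (F v) <= ip (g - A u) (A u - A v) / alpha.
Proof.
move=> ha [hu hmin] hv.
rewrite /Talpha in hmin.
have fin : forall w, (F w < +oo)%E -> exists r, F w = r%:E.
  move=> w; case: hFp => /(_ w) hn _; case: (F w) hn => [r||] //= _ _; by exists r.
have [fu Eu] := fin u hu; have [fv Ev] := fin v hv.
rewrite Eu Ev /=.
set r := g - A u; set d := A v - A u.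
have key : forall t, 0 < t < 1 ->
   fu - fv + ip r d / alpha <= t * (`|d| ^+ 2 / (2 * alpha)).
  move=> t /andP[t0 t1].
  set z := t *: v + (1 - t) *: u.
  have hz : (F z <= (t * fv + (1 - t) * fu)%:E)%E.
    by have := hFc v u t; rewrite t0 t1 Ev Eu => /(_ isT).
  have hzd : domR F z by apply: (le_lt_trans hz); exact: ltry.
  have := hmin z hzd; rewrite Eu => hm.
  have hm2 : (((2 * alpha)^-1 * `|g - A u| ^+ 2)%:E + fu%:E <=
     ((2 * alpha)^-1 * `|g - A z| ^+ 2)%:E + (t * fv + (1 - t) * fu)%:E)%E.
    by apply: (le_trans hm); rewrite leeD2l.
  move: hm2; rewrite -!EFinD lee_fin => hm2.
  have Az : g - A z = r - (t *: d).
    rewrite /z /r /d linearD !linearZ /= scalerN.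
    rewrite scalerBr scalerBl scale1r opprD opprB !addrA.
    rewrite opprB !addrA -!addrA; congr (_ + _).
    by rewrite [LHS]addrC (addrC (t *: A u)) !addrA.
  rewrite Az (normB2 hip r (t *: d)) (ipC hip r) (ipZl hip) (ipC hip d) normrZ in hm2.
  rewrite -/r in hm2.
  rewrite (ger0_norm (ltW t0)) invfM in hm2.
  rewrite invfM.
  have ai0 : 0 < alpha^-1 by rewrite invr_gt0.
  exact: aux_var hm2.
- move=> {hu hmin}.
  have c0 : 0 <= `|d| ^+ 2 / (2 * alpha) by rewrite divr_ge0 ?sqr_ge0 // mulr_ge0 // ltW.
  have := small_t c0 key.
  have -> : A u - A v = - d by rewrite /d opprB.
  rewrite (ipC hip r (- d)) (ipNl hip) (ipC hip d) mulNr; lra.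
Qed.

Lemma subBB (Y : zmodType) (a b c d : Y) :
  (a - b) - (c - d) = (a - c) - (b - d).
Proof.
by rewrite !opprB !addrA (addrAC a (- b)) -!addrA; congr (_ + _); rewrite (addrC (- b)) addrCA.
Qed.

Section Mono.
Variables (R : realType) (X : lmodType R) (Y : normedModType R)
  (ip : Y -> Y -> R) (hip : is_inner_product ip) (A : {linear X -> Y})
  (F : X -> \bar R) (hFp : proper_fun F) (hFc : convex_efun F).

Lemma mono (alpha beta : R) (g1 g2 : Y) (u v : X) : 0 < alpha -> 0 < beta ->
  Ralpha A F alpha g1 u -> Ralpha A F beta g2 v ->
  ip (g2 - A v) (A u - A v) / beta <= ip (g1 - A u) (A u - A v) / alpha.
Proof.
move=> ha hb hu hv.
have h1 := var_ineq hip hFp hFc ha hu (proj1 hv).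
have h2 := var_ineq hip hFp hFc hb hv (proj1 hu).
have e : A v - A u = - (A u - A v) by rewrite opprB.
rewrite e (ipC hip _ (- _)) (ipNl hip) (ipC hip (A u - A v)) mulNr in h2; lra.
Qed.

Lemma nonexp (alpha : R) (g1 g2 : Y) (u v : X) : 0 < alpha ->
  Ralpha A F alpha g1 u -> Ralpha A F alpha g2 v ->
  `|A u - A v| <= `|g1 - g2| /\ `|(g1 - A u) - (g2 - A v)| <= `|g1 - g2|.
Proof.
move=> ha hu hv; have := mono ha ha hu hv.
rewrite ler_pM2r ?invr_gt0 // => h.
have h0 : 0 <= ip ((g1 - A u) - (g2 - A v)) (A u - A v) by rewrite (ipBl hip); lra.
have e : (g1 - A u) - (g2 - A v) = (g1 - g2) - (A u - A v).
  exact: subBB.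
rewrite e in h0 *; rewrite (ipBl hip) (ipn hip) in h0.
have cs := CS hip (g1 - g2) (A u - A v).
have n1 := normB2 hip (g1 - g2) (A u - A v).
have p1 : 0 <= `|A u - A v| by []. have p2 : 0 <= `|g1 - g2| by [].
have p3 : 0 <= `|g1 - g2 - (A u - A v)| by [].
split; first nra.
have : `|g1 - g2 - (A u - A v)| ^+ 2 <= `|g1 - g2| ^+ 2 by nra.
by rewrite ler_sqr ?nnegrE.
Qed.

Lemma shrink (alpha beta : R) (g : Y) (u v : X) : 0 < alpha -> 0 < beta ->
  Ralpha A F alpha g u -> Ralpha A F beta (A u) v ->
  `|A u - A v| <= beta / alpha * `|g - A u|.
Proof.
move=> ha hb hu hv; have := mono ha hb hu hv.
rewrite (ipn hip) => h.
have cs := CS hip (g - A u) (A u - A v).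
have p1 : 0 <= `|A u - A v| by []. have p2 : 0 <= `|g - A u| by [].
have ia : 0 < alpha^-1 by rewrite invr_gt0.
have ib : 0 < beta^-1 by rewrite invr_gt0.
have h3 : `|A u - A v| ^+ 2 / beta <= `|g - A u| * `|A u - A v| / alpha.
  apply: (le_trans h); rewrite ler_pM2r //.
have h4 : `|A u - A v| ^+ 2 <= beta / alpha * `|g - A u| * `|A u - A v|.
  move: h3; rewrite ler_pdivrMr // => h3.
  suff -> : beta / alpha * `|g - A u| * `|A u - A v| =
    `|g - A u| * `|A u - A v| / alpha * beta by [].
  ring.
have q : 0 <= beta / alpha * `|g - A u| by rewrite mulr_ge0 // ?divr_ge0 // ltW.
nra.
Qed.
End Mono.

Section Exist.
Variables (R : realType) (Y : normedModType R) (ip : Y -> Y -> R) (hip : is_inner_product ip).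
Variables (X : lmodType R) (Xt : topologicalType) (e : X -> Xt) (ei : Xt -> X)
  (hei : cancel e ei) (hie : cancel ei e) (hXt : hausdorff_space Xt)
  (F : X -> \bar R) (hFp : proper_fun F)
  (hFcomp : forall lam : R, compact (e @` [set z | (F z <= lam%:E)%E]))
  (A : {linear X -> Y})
  (hA : forall f : {linear Y -> R^o}, continuous f ->
          continuous (fun z : Xt => f (A (ei z)))).
Definition ipf (w : Y) : Y -> R^o := fun y => ip y w.
Lemma ipf_lin w : GRing.linear_for *:%R (ipf w).
Proof. by move=> a u v; case: hip => _ hl _; rewrite /ipf hl. Qed.
HB.instance Definition _ w := GRing.isLinear.Build R Y R^o *:%R (ipf w) (ipf_lin w).

Lemma ipf_cont w : continuous (ipf w).
Proof.
move=> y; apply/cvgrPdist_lt => eps ep.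
have hw : 0 < `|w| + 1 by rewrite ltr_wpDl.
near=> z.
have hz : `|y - z| < eps / (`|w| + 1).
  near: z; exact: ((cvgrPdist_lt _ _).1 (@cvg_id _ (nbhs y)) (eps / (`|w| + 1)) (divr_gt0 ep hw)).
rewrite /ipf -(ipBl hip).
apply: (le_lt_trans (CSabs hip _ _)).
have h1 : `|y - z| * `|w| <= `|y - z| * (`|w| + 1) by rewrite ler_wpM2l // lerDl.
apply: (le_lt_trans h1); rewrite -ltr_pdivlMr //.
Unshelve. all: by end_near. Qed.

Lemma lsc_F p a : (a%:E < F (ei p))%E -> \forall q \near p, (a%:E < F (ei q))%E.
Proof.
move=> hp.
set S := e @` [set z | (F z <= a%:E)%E].
have cS : closed S := compact_closed hXt (@hFcomp a).
have oS : open (~` S) := closed_openC cS.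
have Sp : (~` S) p.
  by move=> [z /= hz ez]; move: hp; rewrite -ez hei ltNge hz.
near=> q.
have : (~` S) q by near: q; apply: open_nbhs_nbhs; split.
move=> hq; rewrite ltNge; apply/negP => hle; apply: hq; exists (ei q) => //; exact: hie.
Unshelve. all: by end_near.
Qed.

Lemma lsc_q (g : Y) (alpha : R) p b : 0 < alpha ->
  b < (2 * alpha)^-1 * `|g - A (ei p)| ^+ 2 ->
  \forall q \near p, b < (2 * alpha)^-1 * `|g - A (ei q)| ^+ 2.
Proof.
move=> ha hb.
set w0 := g - A (ei p).
set k := fun q => (2 * alpha)^-1 * (2 * (ip g w0 - ipf w0 (A (ei q))) - `|w0| ^+ 2).
have hc := @hA _ (@ipf_cont w0) p.
have hk : k @ p --> k p.
  apply: cvgM; first exact: cvg_cst.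
  apply: cvgB; last exact: cvg_cst.
  apply: cvgM; first exact: cvg_cst.
  apply: cvgB; first exact: cvg_cst.
  exact: hc.
have kp : k p = (2 * alpha)^-1 * `|w0| ^+ 2.
  by rewrite /k /ipf -(ipBl hip) (ipn hip); congr (_ * _); ring.
near=> q.
have hq : b < k q by near: q; apply: (cvgr_gt _ hk); rewrite kp.
apply: (lt_le_trans hq); rewrite /k ler_pM2l ?invr_gt0 ?mulr_gt0 //.
have := normB2 hip (g - A (ei q)) w0.
rewrite /ipf -(ipBl hip).
have : 0 <= `|g - A (ei q) - w0| ^+ 2 by rewrite sqr_ge0.
lra.
Unshelve. all: by end_near.
Qed.

Lemma qv_ge0 (g : Y) (alpha : R) x : 0 < alpha -> 0 <= (2 * alpha)^-1 * `|g - A x| ^+ 2.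
Proof. by move=> ha; rewrite mulr_ge0 ?sqr_ge0 // invr_ge0 mulr_ge0 // ltW. Qed.

Lemma lsc_h (g : Y) (alpha : R) q l : 0 < alpha ->
  (l%:E < Talpha A F alpha (ei q) g)%E ->
  \forall r \near q, (l%:E < Talpha A F alpha (ei r) g)%E.
Proof.
rewrite /Talpha => ha hl.
case Eq: (F (ei q)) hl => [fq| |] hl.
- rewrite -EFinD lte_fin in hl.
  set qq := (2 * alpha)^-1 * `|g - A (ei q)| ^+ 2 in hl.
  set d := qq + fq - l.
  have dd : d = qq + fq - l by [].
  have d0 : 0 < d by rewrite /d; lra.
  have h1 := @lsc_q g alpha q (qq - d / 2) ha.
  have h2 := @lsc_F q (fq - d / 2).
  near=> r.
  have hr1 : qq - d / 2 < (2 * alpha)^-1 * `|g - A (ei r)| ^+ 2.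
    by near: r; apply: h1; rewrite -/qq; lra.
  have hr2 : ((fq - d / 2)%:E < F (ei r))%E.
    by near: r; apply: h2; rewrite Eq lte_fin; lra.
  have h3 := leeD2l (((2 * alpha)^-1 * `|g - A (ei r)| ^+ 2)%:E) (ltW hr2).
  rewrite -EFinD in h3.
  apply: (lt_le_trans _ h3).
  rewrite lte_fin; lra.
- have h2 := @lsc_F q l.
  near=> r.
  have hr2 : (l%:E < F (ei r))%E by near: r; apply: h2; rewrite Eq ltry.
  by apply: (lt_le_trans hr2); apply: leeDr; rewrite lee_fin qv_ge0.
- by case: hFp => /(_ (ei q)); rewrite Eq.
Unshelve. all: by end_near.
Qed.

Lemma exist_min (g : Y) (alpha : R) : 0 < alpha -> exists u, Ralpha A F alpha g u.
Proof.
move=> ha.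
set h := fun q => Talpha A F alpha (ei q) g.
have fin : forall z, (F z < +oo)%E -> exists r, F z = r%:E.
  move=> z; case: hFp => /(_ z) hn _; case: (F z) hn => [r||] //= _ _; by exists r.
have [x0 hx0] := hFp.2.
have [f0 E0] := fin x0 hx0.
set l0 := (2 * alpha)^-1 * `|g - A x0| ^+ 2 + f0 + 1.
set I := [set l : R | exists q, (h q < l%:E)%E].
set B := fun l : R => [set q | (h q <= l%:E)%E].
have I0 : I l0.
  exists (e x0); rewrite /h /Talpha hei E0 -EFinD lte_fin /l0; lra.
have filt : Filter (filter_from I B).
  apply: filter_from_filter; first by exists l0.
  move=> i j Ii Ij; have [lij|lij] := leP i j.
  - exists i => // q /= hq; split => //; exact: (le_trans hq).
  - exists j => // q /= hq; split => //; apply: (le_trans hq); rewrite lee_fin; exact: ltW.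
have prop : ProperFilter (filter_from I B).
  by apply: filter_from_proper => l [q hq]; exists q; exact: ltW.
set K0 := e @` [set z | (F z <= l0%:E)%E].
have GK : filter_from I B K0.
  exists l0 => // q hq; exists (ei q); last exact: hie.
  apply: le_trans hq; rewrite /h /Talpha; apply: leeDr; rewrite lee_fin; exact: qv_ge0.
have [p [Kp cp]] := @hFcomp l0 _ prop GK.
have hpl : forall l, I l -> (h p <= l%:E)%E.
  move=> l Il; rewrite leNgt; apply/negP => hlt.
  have N := lsc_h ha hlt.
  have GB : filter_from I B (B l) by exists l.
  have [r [Br Nr]] := cp (B l) _ GB N.
  by move: Br; rewrite /B /= leNgt Nr.
exists (ei p); split.
- rewrite /domR /=.
  apply: (@le_lt_trans _ _ (h p)); first by rewrite /h /Talpha; apply: leeDr; rewrite lee_fin; exact: qv_ge0.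
  by apply: (le_lt_trans (hpl l0 I0)); exact: ltry.
- move=> z hz; have [fz Ez] := fin z hz.
  rewrite {2}/Talpha Ez -EFinD.
  apply/lee_addgt0Pr => eps ep; rewrite -EFinD.
  apply: hpl; exists (e z); rewrite /h hei /Talpha Ez -EFinD lte_fin; lra.
Qed.
End Exist.

Lemma pow_scale (R : realType) (c rho delta nu : R) : 0 <= c -> 0 < rho -> 0 < delta -> 0 < nu ->
  (c * rho `^ (- nu^-1) * delta `^ (nu^-1)) `^ nu = c `^ nu * rho^-1 * delta.
Proof.
move=> c0 r0 d0 n0.
rewrite powRM ?mulr_ge0 ?powR_ge0 // powRM ?powR_ge0 //.
by rewrite -!powRrM mulNr mulVf ?gt_eqF // powRN !powRr1 ?ltW.
Qed.

Lemma aux_div (R : realType) (C P d r : R) : 0 < C -> 0 < P ->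
  C * d <= P * r -> P^-1 * d <= C^-1 * r.
Proof.
move=> C0 P0 h; rewrite -(ler_pM2l (mulr_gt0 P0 C0)).
have -> : P * C * (P^-1 * d) = C * d by field; rewrite gt_eqF.
have -> : P * C * (C^-1 * r) = P * r by field; rewrite gt_eqF.
exact: h.
Qed.

Lemma aux_mul (R : realType) (P Cc d r : R) : 0 < r ->
  P <= Cc * r^-1 * d -> r * P <= Cc * d.
Proof.
move=> r0 h; rewrite -(ler_pM2l r0) in h.
apply: (le_trans h); rewrite le_eqVlt; apply/orP; left; apply/eqP; field.
by rewrite gt_eqF.
Qed.

Lemma aux_mul2 (R : realType) (P Cc d r : R) : 0 < r ->
  Cc * r^-1 * d <= P -> Cc * d <= r * P.
Proof.
move=> r0 h; rewrite -(ler_pM2l r0) in h.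
apply: le_trans h; rewrite le_eqVlt; apply/orP; left; apply/eqP; field.
by rewrite gt_eqF.
Qed.

Lemma tri_aux (R : realType) (V : normedModType R) (a b : V) :
  `|b| <= `|a - b| + `|a|.
Proof. by have := ler_distD a b 0; rewrite !subr0 (distrC b). Qed.
Unset Implicit Arguments.
Theorem theorem1 (R : realType)
  (* the real Banach space X *)
  (X : completeNormedModType R)
  (* (X, tau): the same vector space with a locally convex Hausdorff topology,
     represented by a linear bijection e : X -> Xt *)
  (Xt : tvsType R) (e : {linear X -> Xt}) (ei : Xt -> X)
  (hei : cancel e ei) (hie : cancel ei e) (hXt : hausdorff_space Xt)
  (* the regularizer R *)
  (F : X -> \bar R) (hFp : proper_fun F) (hFc : convex_efun F)
  (hFcomp : forall lam : R, compact (e @` [set z | (F z <= lam%:E)%E]))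
  (* the Hilbert space Y *)
  (Y : completeNormedModType R) (ip : Y -> Y -> R) (hip : is_inner_product ip)
  (* A linear, continuous from (X, tau) to (Y, weak topology) *)
  (A : {linear X -> Y})
  (hA : forall f : {linear Y -> R^o}, continuous f ->
          continuous (fun z : Xt => f (A (ei z))))
  (* L : X x X -> [0, oo] with the triangle inequality *)
  (L : X -> X -> \bar R) (hL0 : forall x y, (0 <= L x y)%E)
  (hLtri : forall x y z, (L x z <= L x y + L y z)%E)
  (nu rho delta : R) (hnu : 0 < nu <= 1) (hrho : 0 < rho) (hdelta : 0 < delta)
  (x : X) (hx : Knu A F nu rho x)
  (gd : Y) (hgd : `|gd - A x| <= delta)
  (alpha : R) (halpha : 0 < alpha) (xh : X) (hxh : Ralpha A F alpha gd xh) :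
  (forall cl cr : R, 0 < cl -> cl <= cr ->
     cl * rho `^ (- nu^-1) * delta `^ (nu^-1) <= alpha ->
     alpha <= cr * rho `^ (- nu^-1) * delta `^ (nu^-1) ->
     (L x xh <= Omega A L ((1 + cr `^ nu) * delta)
                  (Knu A F nu ((2 + cl `^ (- nu)) * rho)))%E)
  /\
  (forall cD CD : R, 1 < cD -> cD < CD ->
     cD * delta <= `|gd - A xh| -> `|gd - A xh| <= CD * delta ->
     (L x xh <= Omega A L ((1 + CD) * delta)
                  (Knu A F nu ((2 + (cD - 1)^-1) * rho)))%E).
Proof.
move: hnu => /andP[nu0 nu1].
have ex := fun g a (ha : 0 < a) => @exist_min R Y ip hip X Xt e ei hei hie hXt F hFp hFcomp A hA g a ha.
have hxb : forall a xa, 0 < a -> Ralpha A F a (A x) xa -> `|A x - A xa| <= rho * a `^ nu.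
  move=> a xa ha hxa.
  have h1 : ((a `^ (- nu) * `|A x - A xa|)%:E <= varrho_nu A F nu x)%E.
    by apply: ereal_sup_ubound; exists a, xa; split => //; split.
  have h2 := le_trans h1 hx; rewrite lee_fin powRN in h2.
  have pa : 0 < a `^ nu := powR_gt0 _ ha.
  set P := a `^ nu in h2 pa *.
  have ep : P * P^-1 = 1 by rewrite mulfV // gt_eqF.
  have hn : 0 <= `|A x - A xa| by [].
  nra.
have [xa hxa] := ex (A x) alpha halpha.
have [hn1 hn2] := nonexp hip hFp hFc halpha hxa hxh.
have hgx : `|A x - gd| <= delta by rewrite distrC.
have hxax := hxb alpha xa halpha hxa.
have pa : 0 < alpha `^ nu := powR_gt0 _ halpha.
have R1 : `|gd - A xh| <= delta + rho * alpha `^ nu.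
  have := tri_aux (A x - A xa) (gd - A xh); lra.
have R2 : `|A x - A xh| <= rho * alpha `^ nu + delta.
  have := ler_distD (A xa) (A x) (A xh); lra.
have claimB : forall b v, 0 < b -> Ralpha A F b (A xh) v ->
    b `^ (- nu) * `|A xh - A v| <= alpha `^ (- nu) * delta + 2 * rho.
  move=> b v hb hv.
  rewrite !powRN.
  have pb : 0 < b `^ nu := powR_gt0 _ hb.
  have hN : 0 <= `|A xh - A v| by [].
  have [hba|hab] := leP b alpha.
  - have s := shrink hip hFp hFc halpha hb hxh hv.
    have k : (b `^ nu)^-1 * b <= (alpha `^ nu)^-1 * alpha.
      have e1 : forall c, 0 < c -> (c `^ nu)^-1 * c = c `^ (1 - nu).
        move=> c hc; rewrite powRD; last by apply/implyP => _; rewrite gt_eqF.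
        by rewrite powRr1 ?ltW // powRN mulrC.
      rewrite !e1 //; apply: ge0_ler_powR; rewrite ?nnegrE; lra.
    set Q := (b `^ nu)^-1 in k *.
    set Pa := (alpha `^ nu)^-1 in k *.
    have Q0 : 0 < Q by rewrite invr_gt0.
    have Pa0 : 0 < Pa by rewrite invr_gt0.
    have t1 : Q * `|A xh - A v| <= (Q * b) * (alpha^-1 * `|gd - A xh|).
      by rewrite -mulrA (mulrA b) ler_pM2l.
    have t2 : (Q * b) * (alpha^-1 * `|gd - A xh|) <= (Pa * alpha) * (alpha^-1 * `|gd - A xh|).
      by rewrite ler_wpM2r // mulr_ge0 // invr_ge0 ltW.
    have t3 : (Pa * alpha) * (alpha^-1 * `|gd - A xh|) = Pa * `|gd - A xh|.
      by field; rewrite gt_eqF.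
    have t4 : Pa * `|gd - A xh| <= Pa * (delta + rho * alpha `^ nu) by rewrite ler_pM2l.
    have t5 : Pa * (delta + rho * alpha `^ nu) = Pa * delta + rho.
      by rewrite /Pa; field; rewrite gt_eqF.
    have : 0 <= Pa * delta by rewrite mulr_ge0 // ltW.
    lra.
  - have [w hw] := ex (A x) b hb.
    have [_ hm2] := nonexp hip hFp hFc hb hv hw.
    have hwx := hxb b w hb hw.
    have t0 : `|A xh - A v| <= `|A xh - A x| + rho * b `^ nu.
      have := tri_aux (A x - A w) (A xh - A v); rewrite (distrC (A x - A w)); lra.
    rewrite (distrC (A xh) (A x)) in t0.
    have Qle : (b `^ nu)^-1 <= (alpha `^ nu)^-1.
      rewrite lef_pV2 ?posrE //; apply: ge0_ler_powR; rewrite ?nnegrE ?ltW //.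
    set Q := (b `^ nu)^-1 in Qle *.
    set Pa := (alpha `^ nu)^-1 in Qle *.
    have Q0 : 0 < Q by rewrite invr_gt0.
    have t1 : Q * `|A xh - A v| <= Q * (rho * alpha `^ nu + delta) + Q * (rho * b `^ nu).
      by rewrite -mulrDr ler_pM2l //; lra.
    have t2 : Q * (rho * b `^ nu) = rho by rewrite /Q; field; rewrite gt_eqF.
    have t3 : Q * (rho * alpha `^ nu + delta) <= Pa * (rho * alpha `^ nu + delta).
      by rewrite ler_wpM2r // addr_ge0 // ?mulr_ge0 // ltW.
    have t4 : Pa * (rho * alpha `^ nu + delta) = rho + Pa * delta.
      by rewrite /Pa; field; rewrite gt_eqF.
    lra.
have Kxh : forall c, alpha `^ (- nu) * delta + 2 * rho <= c -> Knu A F nu c xh.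
  move=> c hc; rewrite /Knu /=; apply: ge_ereal_sup => r [b [v [hb [hv ->]]]].
  by rewrite lee_fin; exact: le_trans (claimB b v hb hv) hc.
have Kx : forall c, rho <= c -> Knu A F nu c x.
  by move=> c hc; rewrite /Knu /=; apply: le_trans hx _; rewrite lee_fin.
have Om : forall c D, Knu A F nu c x -> Knu A F nu c xh -> `|A x - A xh| <= D ->
    (L x xh <= Omega A L D (Knu A F nu c))%E.
  move=> c D h1 h2 h3; apply: ereal_sup_ubound; exists x, xh.
  by split => //; split => //; split.
split.
- move=> cl cr hcl hclr hlo hhi.
  have hcr : 0 < cr by lra.
  have Ecl := pow_scale (ltW hcl) hrho hdelta nu0.
  have Ecr := pow_scale (ltW hcr) hrho hdelta nu0.
  have lo : cl `^ nu * rho^-1 * delta <= alpha `^ nu.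
    have s0 : 0 <= cl * rho `^ (- nu^-1) * delta `^ (nu^-1).
      by rewrite mulr_ge0 ?powR_ge0 // mulr_ge0 ?powR_ge0 // ltW.
    rewrite -Ecl; apply: ge0_ler_powR; rewrite ?nnegrE //; exact: ltW.
  have hi : alpha `^ nu <= cr `^ nu * rho^-1 * delta.
    have s0 : 0 <= cr * rho `^ (- nu^-1) * delta `^ (nu^-1).
      by rewrite mulr_ge0 ?powR_ge0 // mulr_ge0 ?powR_ge0 // ltW.
    rewrite -Ecr; apply: ge0_ler_powR; rewrite ?nnegrE //; exact: ltW.
  have pcl : 0 < cl `^ nu := powR_gt0 _ hcl.
  have lo2 : cl `^ nu * delta <= alpha `^ nu * rho.
    have := aux_mul2 hrho lo; lra.
  have lo3 := aux_div pcl pa lo2.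
  have hi2 := aux_mul hrho hi.
  have pcl' : 0 <= cl `^ (- nu) by exact: powR_ge0.
  apply: Om.
  + by apply: Kx; nra.
  + apply: Kxh; rewrite !powRN; rewrite powRN in pcl'; nra.
  + lra.
- move=> cD CD hcD hCD hlo hhi.
  have c1 : 0 < cD - 1 by lra.
  have lo2 : (cD - 1) * delta <= alpha `^ nu * rho by nra.
  have lo3 := aux_div c1 pa lo2.
  have ic : 0 < (cD - 1)^-1 by rewrite invr_gt0.
  apply: Om.
  + by apply: Kx; nra.
  + apply: Kxh; rewrite powRN; nra.
  + have := ler_distD gd (A x) (A xh); lra.
Qed.
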